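(* Let $D_+, D_-$ be a pair of SBP operators of order $q\ge1$ on $[a,b]$ with associated data $H,S,\mathbf{p}_0,\mathbf{p}_n,\mathbf{x}$, which is nullspace consistent but does not have the eigenvalue property. Let $\|\cdot\|$ be any norm on $\mathbb{R}^{(n+1)\times(n+1)}$ and $\varepsilon>0$. Then there exists a real symmetric positive semidefinite matrix $S'\in\mathbb{R}^{(n+1)\times(n+1)}$ with $S'\mathbf{x}^j=\mathbf{0}$ for $j=0,\dots,q$, such that, setting $D_+' = D_+ + \tfrac12 H^{-1}S'$ and $D_-' = D_- - \tfrac12 H^{-1}S'$: (i) $D_+', D_-'$ form a pair of SBP operators of order $q$ on $[a,b]$ with the data $H$, $S+S'$, $\mathbf{p}_0$, $\mathbf{p}_n$, $\mathbf{x}$; (ii) $D_+'$ is nullspace consistent and has the eigenvalue property, i.e. every eigenvalue of $\tilde D_+' := D_+' + H^{-1}\mathbf{p}_0\mathbf{p}_0^\top$ has strictly positive real part; (iii) every eigenpair $(\lambda,\mathbf{v})$ of $\tilde D_+ = D_+ + H^{-1}\mathbf{p}_0\mathbf{p}_0^\top$ with $\operatorname{Re}(\lambda)\ne0$ is also an eigenpair of $\tilde D_+'$; (iv) $\|D_+' - D_+\|\le\varepsilon$.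
   Context: Let $[a,b]$ be an interval with $b>a$ and $n\ge 1$. For $\mathbf{x}\in\mathbb{R}^{n+1}$, $\mathbf{x}^j$ denotes elementwise exponentiation, with $\mathbf{x}^0=\mathbf{1}=(1,\dots,1)^\top$. Matrices $D_+, D_-\in\mathbb{R}^{(n+1)\times(n+1)}$ form a pair of SBP (summation-by-parts) operators of order $q\ge 1$ on $[a,b]$ if there exist matrices $H,S\in\mathbb{R}^{(n+1)\times(n+1)}$ and vectors $\mathbf{p}_0,\mathbf{p}_n,\mathbf{x}\in\mathbb{R}^{n+1}$ such that: (A) $D_\pm \mathbf{x}^j = j\mathbf{x}^{j-1}$, $\mathbf{p}_0^\top\mathbf{x}^j = a^j$, $\mathbf{p}_n^\top \mathbf{x}^j = b^j$ for $j=0,\dots,q$ (with $0\cdot\mathbf{x}^{-1}:=\mathbf{0}$); (B) $H=H^\top$ is positive definite; (C) $HD_+ + D_+^\top H = -\mathbf{p}_0\mathbf{p}_0^\top + \mathbf{p}_n\mathbf{p}_n^\top + S$ with $S=S^\top$ positive semidefinite; (D) $HD_+ + D_-^\top H = -\mathbf{p}_0\mathbf{p}_0^\top + \mathbf{p}_n\mathbf{p}_n^\top$; (E) $\mathbf{x}=(x_0,\dots,x_n)^\top$ with $x_i\ne x_j$ for $i\ne j$. The SBP operator is called nullspace consistent if $\ker D_+=\operatorname{span}\{\mathbf{1}\}$. Set $\tilde D_+ := D_+ + H^{-1}\mathbf{p}_0\mathbf{p}_0^\top$ (with the $H,\mathbf{p}_0$ of the given data). The SBP operator has the eigenvalue property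 if every eigenvalue of $\tilde D_+$ has strictly positive real part. *)

(* Defs.v *)
From HB Require Import structures.
From mathcomp Require Import all_boot all_order all_algebra.
From mathcomp Require Import reals complex.
Set Implicit Arguments. Unset Strict Implicit. Unset Printing Implicit Defensive.
Import Order.TTheory GRing.Theory Num.Theory.
Local Open Scope ring_scope.

(* Matrices are of size (n+1)x(n+1), indices 'I_n.+1 = {0..n}; vectors are columns. *)

Definition xpow (R : ringType) (m : nat) (x : 'cV[R]_m) (j : nat) : 'cV[R]_m :=
  \col_i (x i 0 ^+ j).

Definition posdef (R : realFieldType) (m : nat) (A : 'M[R]_m) : Prop :=
  forall v : 'cV[R]_m, v != 0 -> 0 < (v^T *m A *m v) 0 0.

Definition psd (R : realFieldType) (m : nat) (A : 'M[R]_m) : Prop :=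
  forall v : 'cV[R]_m, 0 <= (v^T *m A *m v) 0 0.

Definition SBP_pair (R : realFieldType) (n q : nat) (a b : R)
  (Dp Dm H S : 'M[R]_n.+1) (p0 pn x : 'cV[R]_n.+1) : Prop :=
  (forall j, (j <= q)%N ->
     [/\ Dp *m xpow x j = j%:R *: xpow x j.-1,
         Dm *m xpow x j = j%:R *: xpow x j.-1,
         p0^T *m xpow x j = (a ^+ j)%:M &
         pn^T *m xpow x j = (b ^+ j)%:M]) /\
  (H^T = H /\ posdef H) /\
  (H *m Dp + Dp^T *m H = - (p0 *m p0^T) + pn *m pn^T + S /\ S^T = S /\ psd S) /\
  (H *m Dp + Dm^T *m H = - (p0 *m p0^T) + pn *m pn^T) /\
  (forall i j : 'I_n.+1, i != j -> x i 0 != x j 0).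

Definition nullspace_consistent (R : fieldType) (m : nat) (D : 'M[R]_m) : Prop :=
  forall v : 'cV[R]_m, D *m v = 0 <-> exists c : R, v = c *: const_mx 1.

Definition tildeD (R : fieldType) (m : nat) (Dp H : 'M[R]_m) (p0 : 'cV[R]_m) : 'M[R]_m :=
  Dp + invmx H *m (p0 *m p0^T).

Definition eigenpair (R : rcfType) (m : nat) (A : 'M[R]_m) (lam : R[i])
  (v : 'cV[R[i]]_m) : Prop :=
  v != 0 /\ map_mx (real_complex R) A *m v = lam *: v.

Definition eigenvalue_property (R : rcfType) (m : nat) (A : 'M[R]_m) : Prop :=
  forall (lam : R[i]) (v : 'cV[R[i]]_m), eigenpair A lam v -> 0 < complex.Re lam.

Definition is_matrix_norm (R : realFieldType) (m : nat) (N : 'M[R]_m -> R) : Prop :=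
  [/\ forall A, 0 <= N A,
      forall A, N A = 0 -> A = 0,
      forall (c : R) A, N (c *: A) = `|c| * N A &
      forall A B, N (A + B) <= N A + N B].

(* Main.v *)
Require Import Defs.
From HB Require Import structures.
From mathcomp Require Import all_boot all_order all_algebra.
From mathcomp Require Import reals complex.
From mathcomp Require Import ring lra zify.
Set Implicit Arguments. Unset Strict Implicit. Unset Printing Implicit Defensive.
Import Order.TTheory GRing.Theory Num.Theory.
Local Open Scope ring_scope.


Lemma vTv_ge0 (R : realFieldType) m (v : 'cV[R]_m) : 0 <= (v^T *m v) 0 0.
Proof.
rewrite !mxE; apply: sumr_ge0 => i _; rewrite !mxE -expr2; exact: sqr_ge0.
Qed.

Lemma vTv_eq0 (R : realFieldType) m (v : 'cV[R]_m) : (v^T *m v) 0 0 = 0 -> v = 0.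
Proof.
rewrite !mxE => /eqP; rewrite psumr_eq0; last first.
  by move=> i _; rewrite !mxE -expr2; exact: sqr_ge0.
move/allP=> h; apply/matrixP=> i j; rewrite ord1 !mxE.
have /h : i \in index_enum 'I_m by rewrite mem_index_enum.
by rewrite /= !mxE -expr2 sqrf_eq0 => /eqP.
Qed.

Lemma psd_zero (R : realFieldType) m (Q : 'M[R]_m) (x : 'cV[R]_m) :
  Q^T = Q -> psd Q -> (x^T *m Q *m x) 0 0 = 0 -> Q *m x = 0.
Proof.
move=> sQ pQ h.
have key : forall y : 'cV[R]_m, (y^T *m Q *m x) 0 0 = 0.
  move=> y.
  set c : R := (y^T *m Q *m x) 0 0; set d : R := (y^T *m Q *m y) 0 0.
  have hd : 0 <= d by exact: pQ.
  have e : forall t : R, (t *: y + x)^T *m Q *m (t *: y + x) =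
     (t^+2 * d + 2 * t * c + (x^T *m Q *m x) 0 0)%:M.
    move=> t.
    have cx : (x^T *m Q *m y) = c%:M.
      rewrite [LHS]mx11_scalar; congr (_%:M).
      have -> : (x^T *m Q *m y) 0 0 = ((x^T *m Q *m y)^T) 0 0 by rewrite [RHS]mxE.
      by rewrite !trmx_mul trmxK sQ mulmxA.
    rewrite (raddfD trmx) /= !linearZ /= !mulmxDl !mulmxDr -!scalemxAl -!scalemxAr.
    rewrite cx [y^T *m Q *m x]mx11_scalar [y^T *m Q *m y]mx11_scalar.
    rewrite [x^T *m Q *m x]mx11_scalar -/c -/d.
    apply/matrixP=> i j; rewrite !mxE; rewrite ?ord1 /=; ring.
  have ht : forall t : R, 0 <= t^+2 * d + 2 * t * c.
    move=> t; have := pQ (t *: y + x); rewrite e h mxE /= addr0 mulr1n //.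
  clear e.
  have d1 : 0 < d + 1 by lra.
  have [u cu] : exists u : R, c = u * (d + 1).
    by exists (c / (d + 1)); rewrite divfK // lt0r_neq0.
  have := ht (- u); rewrite cu => H1; clear ht.
  have u0 : u = 0 by nra.
  by rewrite u0 mul0r.
have := key (Q *m x).
rewrite -mulmxA => /vTv_eq0.
by [].
Qed.



Lemma rinj_unit (R : fieldType) m (A : 'M[R]_m) :
  (forall z : 'rV[R]_m, z *m A = 0 -> z = 0) -> A \in unitmx.
Proof.
move=> h; rewrite -row_free_unit -kermx_eq0; apply/rowV0P=> v /sub_kermxP.
exact: h.
Qed.

Lemma inj_unit (R : fieldType) m (A : 'M[R]_m) :
  (forall v : 'cV[R]_m, A *m v = 0 -> v = 0) -> A \in unitmx.
Proof.
move=> h; rewrite -unitmx_tr; apply: rinj_unit => z hz.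
apply: trmx_inj; rewrite trmx0; apply: h.
by rewrite -[A]trmxK -trmx_mul hz trmx0.
Qed.

Lemma posdef_inj (R : realFieldType) m (A : 'M[R]_m) (v : 'cV[R]_m) :
  posdef A -> A *m v = 0 -> v = 0.
Proof.
move=> pA hv; apply/eqP; apply: contraT => /pA.
by rewrite -mulmxA hv mulmx0 mxE ltxx.
Qed.

Lemma posdef_unit (R : realFieldType) m (A : 'M[R]_m) : posdef A -> A \in unitmx.
Proof. by move=> pA; apply: inj_unit => v; exact: posdef_inj. Qed.

Lemma posdef_ge0 (R : realFieldType) m (A : 'M[R]_m) (v : 'cV[R]_m) :
  posdef A -> 0 <= (v^T *m A *m v) 0 0.
Proof.
move=> pA; have [->|/pA /ltW //] := eqVneq v 0.
by rewrite mulmx0 mxE.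
Qed.

Definition reV (R : rcfType) m p (v : 'M[R[i]]_(m,p)) := map_mx (@complex.Re R) v.
Definition imV (R : rcfType) m p (v : 'M[R[i]]_(m,p)) := map_mx (@complex.Im R) v.

Lemma Re_cmul (R : rcfType) m n p (X : 'M[R]_(m,n)) (v : 'M[R[i]]_(n,p)) i j :
  complex.Re ((map_mx (real_complex R) X *m v) i j) = (X *m reV v) i j.
Proof.
rewrite !mxE raddf_sum; apply: eq_bigr => k _; rewrite !mxE.
by case: (v k j) => c d /=; simpc.
Qed.

Lemma Im_cmul (R : rcfType) m n p (X : 'M[R]_(m,n)) (v : 'M[R[i]]_(n,p)) i j :
  complex.Im ((map_mx (real_complex R) X *m v) i j) = (X *m imV v) i j.
Proof.
rewrite !mxE raddf_sum; apply: eq_bigr => k _; rewrite !mxE.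
by case: (v k j) => c d /=; simpc.
Qed.

Lemma cmx_eq (R : rcfType) m p (u w : 'M[R[i]]_(m,p)) :
  reV u = reV w -> imV u = imV w -> u = w.
Proof.
move=> /matrixP hr /matrixP hi; apply/matrixP=> i j.
have := hr i j; have := hi i j; rewrite !mxE.
by case: (u i j) => a b; case: (w i j) => c d /= -> ->.
Qed.

Lemma eig_split (R : rcfType) m (X : 'M[R]_m) (lam : R[i]) (v : 'cV[R[i]]_m) :
  map_mx (real_complex R) X *m v = lam *: v ->
  X *m reV v = complex.Re lam *: reV v - complex.Im lam *: imV v /\
  X *m imV v = complex.Im lam *: reV v + complex.Re lam *: imV v.
Proof.
move=> /matrixP h; split; apply/matrixP=> i j; have := h i j.
  move=> e; rewrite -Re_cmul e !mxE.
  by case: lam {e h} => a b; case: (v i j) => c d /=; simpc.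
move=> e; rewrite -Im_cmul e !mxE.
by case: lam {e h} => a b; case: (v i j) => c d /=; simpc; rewrite addrC.
Qed.

Lemma cmul_zero (R : rcfType) m n (X : 'M[R]_(m,n)) (v : 'cV[R[i]]_n) :
  X *m reV v = 0 -> X *m imV v = 0 -> map_mx (real_complex R) X *m v = 0.
Proof.
move=> h1 h2; apply: cmx_eq; apply/matrixP=> i j; rewrite [LHS]mxE.
  by rewrite Re_cmul h1 !mxE.
by rewrite Im_cmul h2 !mxE.
Qed.

Lemma cvec_eq0 (R : rcfType) m p (v : 'M[R[i]]_(m,p)) :
  reV v = 0 -> imV v = 0 -> v = 0.
Proof.
move=> h1 h2; apply: cmx_eq; first by rewrite h1; apply/matrixP=> i j; rewrite !mxE.
by rewrite h2; apply/matrixP=> i j; rewrite !mxE.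
Qed.



Fixpoint Kc (R : fieldType) n (P A : 'M[R]_n.+1) (m : nat) : 'M[R]_n.+1 :=
  if m is m'.+1 then (Kc P A m' :&: kermx ((P *m A ^+ m')^T))%MS else 1%:M.

Lemma Kc_sub (R : fieldType) n (P A : 'M[R]_n.+1) m p (X : 'M[R]_(p, n.+1)) :
  (X <= Kc P A m)%MS <-> (forall k, (k < m)%N -> X *m (P *m A ^+ k)^T = 0).
Proof.
elim: m => [|m IH] /=; first by split=> // _; exact: submx1.
rewrite sub_capmx; split.
  move=> /andP[/IH h1 /sub_kermxP h2] k; rewrite ltnS leq_eqVlt.
  by case/orP=> [/eqP->|] //; exact: h1.
move=> h; apply/andP; split; first by apply/IH => k hk; apply: h; lia.
by apply/sub_kermxP; apply: h.
Qed.

Lemma Kc_decr (R : fieldType) n (P A : 'M[R]_n.+1) m :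
  (Kc P A m.+1 <= Kc P A m)%MS.
Proof. exact: capmxSl. Qed.

Lemma Kc_stab (R : fieldType) n (P A : 'M[R]_n.+1) :
  exists m, (Kc P A m <= Kc P A m.+1)%MS.
Proof.
suff : forall i, (exists m, (Kc P A m <= Kc P A m.+1)%MS) \/
   (\rank (Kc P A i) + i <= n.+1)%N.
  by case/(_ n.+2) => // h; exfalso; lia.
elim=> [|i [h|h]]; [right; rewrite addn0; exact: rank_leq_col| by left|].
case b: (Kc P A i <= Kc P A i.+1)%MS; first by left; exists i; rewrite b.
right; have [le e] := mxrank_leqif_sup (Kc_decr P A i).
move: e; rewrite b => e.
have : (\rank (Kc P A i.+1) < \rank (Kc P A i))%N by rewrite ltn_neqAle le e.
lia.
Qed.



Lemma sum3_eq0 (R : realFieldType) (a b c : R) :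
  0 <= a -> 0 <= b -> 0 <= c -> a + b + c = 0 -> a = 0.
Proof. lra. Qed.

Lemma sum2_eq0 (R : realFieldType) (a b : R) :
  0 <= a -> 0 <= b -> a + b = 0 -> a = 0 /\ b = 0.
Proof. move=> *; split; lra. Qed.

Lemma xpow0 (R : nzRingType) m (x : 'cV[R]_m) : xpow x 0 = const_mx 1.
Proof. by apply/matrixP=> i j; rewrite !mxE expr0. Qed.

Lemma mx11_eq0 (R : nzRingType) (u : 'M[R]_1) : u 0 0 = 0 -> u = 0.
Proof. by move=> h; apply/matrixP=> i j; rewrite !ord1 h mxE. Qed.

Lemma unit_cancel0 (R : comUnitRingType) m p (M : 'M[R]_m) (C : 'M[R]_(m, p)) :
  M \in unitmx -> M *m C = 0 -> C = 0.
Proof. by move=> MU h; rewrite -[C]mul1mx -(mulVmx MU) -mulmxA h mulmx0. Qed.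

Lemma zh (V : zmodType) (x y s : V) : - x + y + s + (x + x) = x + y + s.
Proof. by rewrite addrC !addrA addrK. Qed.

Lemma mxE_add (R : nmodType) m p (A B : 'M[R]_(m,p)) i j : (A + B) i j = A i j + B i j.
Proof. by rewrite mxE. Qed.

Lemma mxE_sub (R : zmodType) m p (A B : 'M[R]_(m,p)) i j : (A - B) i j = A i j - B i j.
Proof. by rewrite !mxE. Qed.

Lemma mxE_scale (R : pzRingType) m p (a : R) (A : 'M[R]_(m,p)) i j : (a *: A) i j = a * A i j.
Proof. by rewrite mxE. Qed.

Lemma half2 (R : realFieldType) m p (X : 'M[R]_(m,p)) : 2^-1 *: X + 2^-1 *: X = X.
Proof.
rewrite -scalerDl.
have -> : (2^-1 + 2^-1 : R) = 1 by lra.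
by rewrite scale1r.
Qed.

Lemma eps_bound (R : realFieldType) (eps c : R) : 0 < eps -> 0 <= c ->
  0 < eps / (c + 1) /\ 2^-1 * (eps / (c + 1)) * c <= eps.
Proof.
move=> e0 c0.
have c1 : 0 < c + 1 by lra.
have u0 : 0 < eps / (c + 1) by rewrite divr_gt0.
have uc : eps / (c + 1) * (c + 1) = eps by rewrite divfK // lt0r_neq0.
split => //; move: u0 uc; move: (eps / (c + 1)) => u u0 uc.
nra.
Qed.

Lemma tr11 (R : comPzSemiRingType) (u : 'M[R]_1) : u^T 0 0 = u 0 0.
Proof. by rewrite mxE. Qed.

Lemma bf_sym (R : comPzSemiRingType) m (X : 'M[R]_m) (u v : 'cV[R]_m) :
  X^T = X -> (u^T *m X *m v) 0 0 = (v^T *m X *m u) 0 0.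
Proof. by move=> sX; rewrite -tr11 !trmx_mul trmxK sX mulmxA. Qed.

Lemma quad (R : realFieldType) m (H B Q : 'M[R]_m) (y : 'cV[R]_m) :
  H^T = H -> H *m B + B^T *m H = Q ->
  2 * (y^T *m H *m (B *m y)) 0 0 = (y^T *m Q *m y) 0 0.
Proof.
move=> sH <-; rewrite mulmxDr mulmxDl mxE_add.
have -> : (y^T *m (B^T *m H) *m y) 0 0 = (y^T *m H *m (B *m y)) 0 0.
  by rewrite -tr11 !trmx_mul !trmxK sH !mulmxA.
by rewrite !mulmxA mulr2n mulrDl mul1r.
Qed.

Lemma e1L (R : comPzSemiRingType) m (u w : 'cV[R]_m) :
  w^T *m (u *m u^T) *m w = (u^T *m w)^T *m (u^T *m w).
Proof. by rewrite trmx_mul trmxK !mulmxA. Qed.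

Lemma mxE_opp (R : zmodType) m p (A : 'M[R]_(m,p)) i j : (- A) i j = - A i j.
Proof. by rewrite mxE. Qed.

Lemma arith1 (R : realFieldType) (al be haa hbb hab qa qb : R) :
  2 * (al * haa - be * hab) = qa -> 2 * (be * hab + al * hbb) = qb ->
  0 <= qa -> 0 <= qb -> 0 < haa + hbb -> al <= 0 -> al = 0 /\ qa = 0 /\ qb = 0.
Proof.
move=> e1 e2 q1 q2 h a0.
have e3 : 2 * al * (haa + hbb) = qa + qb by rewrite -e1 -e2; ring.
have : al = 0 by nra.
move=> al0; split => //; move: e3; rewrite al0 mulr0 mul0r => e3; split; lra.
Qed.

Lemma arith2 (R : realFieldType) (al be gaa gbb gab : R) :
  al != 0 -> 0 <= gaa -> 0 <= gbb ->
  - (al * gaa - be * gab) = 0 -> - (be * gab + al * gbb) = 0 -> gaa = 0 /\ gbb = 0.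
Proof.
move=> a0 h1 h2 e1 e2.
have : al * (gaa + gbb) == 0 by apply/eqP; rewrite mulrDr; lra.
rewrite mulf_eq0 (negbTE a0) /= => /eqP h; split; lra.
Qed.

Lemma skew0 (R : realFieldType) (e : R) : e = - e -> e = 0.
Proof. lra. Qed.

Theorem theorem2 (R : realType) (n q : nat) (a b : R)
  (Dp Dm H S : 'M[R]_n.+1) (p0 pn x : 'cV[R]_n.+1) :
  (1 <= n)%N -> (1 <= q)%N -> a < b ->
  SBP_pair q a b Dp Dm H S p0 pn x ->
  nullspace_consistent Dp ->
  ~ eigenvalue_property (tildeD Dp H p0) ->
  forall (N : 'M[R]_n.+1 -> R), is_matrix_norm N ->
  forall eps : R, 0 < eps ->
  exists S' : 'M[R]_n.+1,
    [/\ S'^T = S', psd S',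
        (forall j, (j <= q)%N -> S' *m xpow x j = 0) &
        let Dp' := Dp + 2^-1 *: (invmx H *m S') in
        let Dm' := Dm - 2^-1 *: (invmx H *m S') in
        [/\ SBP_pair q a b Dp' Dm' H (S + S') p0 pn x,
            nullspace_consistent Dp' /\ eigenvalue_property (tildeD Dp' H p0),
            (forall (lam : R[i]) (v : 'cV[R[i]]_n.+1),
                eigenpair (tildeD Dp H p0) lam v -> complex.Re lam != 0 ->
                eigenpair (tildeD Dp' H p0) lam v) &
            N (Dp' - Dp) <= eps]].
Proof.
move=> _ _ _ SBP nsc _ N [N0 N1 N2 N3] eps eps0.
have SBP' := SBP.
move: SBP => [hA [[sH pH] [[eC [sS pS]] [eD hE]]]].
have HU : H \in unitmx := posdef_unit pH.
set Hi := invmx H.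
have HHi : H *m Hi = 1%:M := mulmxV HU.
have HiH : Hi *m H = 1%:M := mulVmx HU.
have sHi : Hi^T = Hi by rewrite trmx_inv sH.
set A := tildeD Dp H p0.
set X0 := p0 *m p0^T.
have sX0 : X0^T = X0 by rewrite trmx_mul trmxK.
set P := X0 + pn *m pn^T + S.
have sP : P^T = P by rewrite !raddfD /= sX0 trmx_mul trmxK sS.
have eqA : H *m A + A^T *m H = P.
  rewrite /A /tildeD -/Hi -/X0 mulmxDr mulmxA HHi mul1mx.
  rewrite raddfD /= mulmxDl trmx_mul sX0 sHi -mulmxA HiH mulmx1.
  by rewrite addrACA eC; exact: zh.
have HA : H *m A = P - A^T *m H by rewrite -eqA addrK.
have Pkill : forall w : 'cV_n.+1, P *m w = 0 -> p0^T *m w = 0.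
  move=> w hw.
  have e0 : (w^T *m P *m w) 0 0 = 0 by rewrite -mulmxA hw mulmx0 mxE.
  have e1 : forall u : 'cV_n.+1, w^T *m (u *m u^T) *m w = (u^T *m w)^T *m (u^T *m w).
    by move=> u; rewrite trmx_mul trmxK !mulmxA.
  move: e0; rewrite /P !mulmxDr !mulmxDl /X0 !e1 !mxE_add.
  by move/(sum3_eq0 (vTv_ge0 _) (vTv_ge0 _) (pS w)) /vTv_eq0.
have PkillM : forall k (Y : 'M_(n.+1, k)), P *m Y = 0 -> p0^T *m Y = 0.
  move=> k Y hY; apply/matrixP=> i j.
  have := Pkill (Y *m delta_mx j 0); rewrite mulmxA hY mul0mx.
  move=> /(_ erefl) /matrixP /(_ i 0); rewrite mulmxA -colE !mxE => ->.
  by [].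
have [m hst] := Kc_stab P A.
set K := Kc P A m.
set Bt := row_base K.
have Bfree : row_free Bt := row_base_free K.
have KP : forall k, (k < m.+1)%N -> Bt *m (P *m A ^+ k)^T = 0.
  apply/Kc_sub; apply: submx_trans hst; by rewrite eq_row_base.
have KM : forall w : 'cV_n.+1, (forall k, (k < m)%N -> P *m A ^+ k *m w = 0) ->
    (w^T <= Bt)%MS.
  move=> w h; rewrite eq_row_base; apply/Kc_sub => k hk.
  by rewrite -trmx_mul h // trmx0.
have BP : Bt *m P = 0.
  by have := KP 0%N erefl; rewrite expr0 mulmx1 sP.
have PB : P *m Bt^T = 0.
  by rewrite -sP -trmx_mul BP trmx0.
have [M eM] : exists M, Bt *m A^T = M *m Bt.
  apply/submxP; rewrite eq_row_base; apply/Kc_sub => k hk.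
  rewrite -(mulmxA Bt) -trmx_mul -(mulmxA P) mulmxE -exprSr -mulmxE; exact: KP.
have Bp0 : Bt *m p0 = 0.
  by rewrite -[Bt]trmxK -[p0]trmxK -trmx_mul PkillM // trmx0.
clearbody Bt.
have x0E : xpow x 0 = const_mx 1 := xpow0 x.
have p01 : p0^T *m const_mx 1 = 1%:M.
  by have [_ _ h _] := hA 0%N (leq0n _); move: h; rewrite x0E expr0 => h; exact: h.
have Dp1 : Dp *m (const_mx 1 : 'cV_n.+1) = 0.
  by have [h _ _ _] := hA 0%N (leq0n _); move: h; rewrite x0E scale0r => h; exact: h.
have AE : forall w : 'cV_n.+1, A *m w = Dp *m w + Hi *m p0 *m (p0^T *m w).
  by move=> w; rewrite /A /tildeD mulmxDl -!mulmxA.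
have Ainj : forall w : 'cV_n.+1, P *m w = 0 -> A *m w = 0 -> w = 0.
  move=> w Pw Aw.
  have p0w := Pkill w Pw.
  move: Aw; rewrite AE p0w mulmx0 addr0 => /nsc [c wc].
  move: p0w; rewrite wc -scalemxAr p01 => /matrixP /(_ 0 0).
  rewrite !mxE /= mulr1n mulr1 => c0.
  by rewrite c0 scale0r.
have MU : M \in unitmx.
  apply: rinj_unit => z hz.
  apply: (row_free_inj Bfree); rewrite mul0mx.
  apply: trmx_inj; rewrite trmx0; apply: Ainj.
    by rewrite trmx_mul mulmxA PB mul0mx.
  by rewrite -[A]trmxK -trmx_mul -mulmxA eM mulmxA hz mul0mx trmx0.
have BHA : Bt *m H *m A = - (M *m (Bt *m H)).
  by rewrite -(mulmxA Bt) HA mulmxDr mulmxN BP sub0r (mulmxA Bt) eM -mulmxA.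
have CjE : forall j, (j <= q)%N ->
    - (M *m (Bt *m H *m xpow x j)) = j%:R *: (Bt *m H *m xpow x j.-1).
  move=> j hj; rewrite mulmxA -mulNmx -BHA -(mulmxA (Bt *m H)) AE.
  have [h1 _ _ _] := hA j hj; rewrite h1 mulmxDr -scalemxAr.
  rewrite !mulmxA -(mulmxA Bt H Hi) HHi mulmx1 Bp0 !mul0mx addr0.
  by [].
have Cj : forall j, (j <= q)%N -> Bt *m H *m xpow x j = 0.
  elim=> [|j IH] hj; apply: (unit_cancel0 MU); apply: oppr_inj; rewrite oppr0 CjE //.
    by rewrite scale0r.
  by rewrite /= IH ?scaler0 //; apply: ltnW.
have pP : psd P.
  move=> w; rewrite /P !mulmxDr !mulmxDl /X0 !e1L !mxE_add.
  by rewrite !addr_ge0 // ?vTv_ge0 // pS.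
set Y := Bt *m H.
set S0 := Y^T *m Y.
have sS0 : S0^T = S0 by rewrite /S0 trmx_mul trmxK.
have S0q : forall v : 'cV_n.+1, v^T *m S0 *m v = (Y *m v)^T *m (Y *m v).
  by move=> v; rewrite trmx_mul !mulmxA.
have [del0 delb] := eps_bound eps0 (N0 (Hi *m S0)).
set del := eps / (N (Hi *m S0) + 1) in del0 delb.
set S' := del *: S0.
have sS' : S'^T = S' by rewrite /S' linearZ /= sS0.
have S'q : forall v : 'cV_n.+1, (v^T *m S' *m v) 0 0 = del * ((Y *m v)^T *m (Y *m v)) 0 0.
  by move=> v; rewrite -scalemxAr -scalemxAl mxE S0q.
have pS' : psd S'.
  by move=> v; rewrite S'q mulr_ge0 ?vTv_ge0 // ltW.
have S'x : forall j, (j <= q)%N -> S' *m xpow x j = 0.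
  by move=> j hj; rewrite -scalemxAl /S0 -mulmxA Cj // mulmx0 scaler0.
exists S'; split => //.
move=> Dp' Dm'.
set T := 2^-1 *: (Hi *m S').
have Tx : forall j, (j <= q)%N -> T *m xpow x j = 0.
  by move=> j hj; rewrite -scalemxAl -mulmxA S'x // mulmx0 scaler0.
have HT : H *m T = 2^-1 *: S' by rewrite -scalemxAr mulmxA HHi mul1mx.
have TH : T^T *m H = 2^-1 *: S'.
  by rewrite linearZ /= trmx_mul sS' sHi -scalemxAl -mulmxA HiH mulmx1.
have SBPn : SBP_pair q a b Dp' Dm' H (S + S') p0 pn x.
  split.
    move=> j hj; have [h1 h2 h3 h4] := hA j hj; split => //.
      by rewrite mulmxDl Tx // addr0.
    by rewrite mulmxBl Tx // subr0.
  split; first by [].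
  split.
    split.
      rewrite mulmxDr raddfD /= mulmxDl addrACA eC HT TH half2.
      by rewrite !addrA.
    split; first by rewrite raddfD /= sS sS'.
    by move=> v; rewrite mulmxDr mulmxDl mxE_add addr_ge0.
  split => //.
  rewrite mulmxDr raddfB /= mulmxBl addrACA eD HT TH subrr addr0.
  by [].
have A'E : tildeD Dp' H p0 = A + T by rewrite /tildeD /A /tildeD /Dp' addrAC.
have eqA' : H *m tildeD Dp' H p0 + (tildeD Dp' H p0)^T *m H = P + S'.
  by rewrite A'E (mulmxDr H A T) (raddfD trmx A T) /= (mulmxDl A^T T^T H) addrACA eqA HT TH half2.
have pQ : psd (P + S').
  by move=> v; rewrite mulmxDr mulmxDl mxE_add addr_ge0.
have kill : forall u : 'cV_n.+1, (u^T *m (P + S') *m u) 0 0 = 0 ->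
    P *m u = 0 /\ Y *m u = 0.
  move=> u; rewrite mulmxDr mulmxDl mxE_add => /(sum2_eq0 (pP u) (pS' u)) [h1 h2].
  split; first exact: psd_zero sP pP h1.
  move: h2; rewrite S'q => /eqP; rewrite mulf_eq0 (gt_eqF del0) /= => /eqP.
  exact: vTv_eq0.
have inK0 : forall u : 'cV_n.+1,
    (forall k, (k < m)%N -> P *m A ^+ k *m u = 0) -> Y *m u = 0 -> u = 0.
  move=> u hu yu; have /submxP [c uc] := KM u hu.
  apply/eqP; apply: contraT => /pH.
  have -> : u^T *m H *m u = c *m (Y *m u) by rewrite uc /Y !mulmxA.
  by rewrite yu mulmx0 mxE ltxx.
have S'Y : forall u : 'cV_n.+1, Y *m u = 0 -> S' *m u = 0.
  by move=> u yu; rewrite -scalemxAl /S0 -mulmxA yu mulmx0 scaler0.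
have TY : forall u : 'cV_n.+1, Y *m u = 0 -> T *m u = 0.
  by move=> u yu; rewrite -scalemxAl -mulmxA S'Y // mulmx0 scaler0.
have EP : eigenvalue_property (tildeD Dp' H p0).
  move=> nu w [wn0 hw].
  have [ea eb] := eig_split hw.
  have qa := quad (reV w) sH eqA'.
  have qb := quad (imV w) sH eqA'.
  rewrite ea mulmxBr -!scalemxAr mxE_sub !mxE_scale in qa.
  rewrite eb mulmxDr -!scalemxAr mxE_add !mxE_scale in qb.
  rewrite (bf_sym (imV w) (reV w) sH) in qb.
  have hpos : 0 < ((reV w)^T *m H *m reV w) 0 0 + ((imV w)^T *m H *m imV w) 0 0.
    have [wa0|/pH ha] := eqVneq (reV w) 0.
      have [wb0|/pH hb] := eqVneq (imV w) 0.
        by move: wn0; rewrite (cvec_eq0 wa0 wb0) eqxx.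
      by rewrite wa0 mulmx0 mxE add0r.
    by rewrite ltr_wpDr // posdef_ge0.
  rewrite ltNge; apply/negP => al0.
  have [al00 [qa0 qb0]] := arith1 qa qb (pQ _) (pQ _) hpos al0.
  have [Pa Ya] := kill _ qa0.
  have [Pb Yb] := kill _ qb0.
  have Aa : A *m reV w = - (complex.Im nu *: imV w).
    by move: ea; rewrite A'E (mulmxDl A T) TY // addr0 al00 scale0r sub0r.
  have Ab : A *m imV w = complex.Im nu *: reV w.
    by move: eb; rewrite A'E (mulmxDl A T) TY // addr0 al00 scale0r addr0.
  have inv : forall k, P *m A ^+ k *m reV w = 0 /\ P *m A ^+ k *m imV w = 0.
    elim=> [|k [ik1 ik2]]; first by rewrite expr0 mulmx1 Pa Pb.
    rewrite exprSr -mulmxE !mulmxA -!(mulmxA (P *m A ^+ k) A) Aa Ab.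
    by rewrite mulmxN -!scalemxAr ik1 ik2 !scaler0 oppr0.
  have wa0 : reV w = 0 by apply: inK0 => // k _; case: (inv k).
  have wb0 : imV w = 0 by apply: inK0 => // k _; case: (inv k).
  by move: wn0; rewrite (cvec_eq0 wa0 wb0) eqxx.
have T1 : T *m (const_mx 1 : 'cV_n.+1) = 0.
  by move: (Tx 0%N (leq0n _)); rewrite x0E => h; exact: h.
have Dp'1 : Dp' *m (const_mx 1 : 'cV_n.+1) = 0.
  by rewrite mulmxDl Dp1 T1 addr0.
have NS : nullspace_consistent Dp'.
  move=> v; split; last by move=> [c ->]; rewrite -scalemxAr Dp'1 scaler0.
  move=> hv.
  set c := (p0^T *m v) 0 0.
  set w := v - c *: (const_mx 1 : 'cV_n.+1).
  have Dw : Dp' *m w = 0 by rewrite mulmxBr hv -scalemxAr Dp'1 scaler0 subrr.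
  have pw : p0^T *m w = 0.
    rewrite mulmxBr -scalemxAr p01 [p0^T *m v]mx11_scalar -/c.
    by apply/matrixP=> i j; rewrite !mxE !ord1 /= !mulr1n mulr1 subrr.
  have Aw : tildeD Dp' H p0 *m w = 0.
    by rewrite /tildeD mulmxDl Dw add0r -mulmxA -mulmxA pw !mulmx0.
  have w0 : w = 0.
    apply/eqP; apply: contraT => wn0.
    have : eigenpair (tildeD Dp' H p0) 0 (map_mx (real_complex R) w).
      split; first by rewrite map_mx_eq0.
      by rewrite -map_mxM Aw map_mx0 scale0r.
    by move/EP; rewrite ltxx.
  by exists c; apply/eqP; rewrite -subr_eq0 -/w w0.
have III : forall (lam : R[i]) (v : 'cV_n.+1),
    eigenpair A lam v -> complex.Re lam != 0 -> eigenpair (tildeD Dp' H p0) lam v.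
  move=> lam v [vn0 hv] lam0; split => //.
  have [ea eb] := eig_split hv.
  suff [ya yb] : Y *m reV v = 0 /\ Y *m imV v = 0.
    by rewrite A'E map_mxD mulmxDl hv cmul_zero ?addr0 // TY.
  set G := Y *m Bt^T.
  have sG : G^T = G by rewrite /G /Y !trmx_mul trmxK sH mulmxA.
  have pG : posdef G.
    move=> z zn0.
    have : Bt^T *m z != 0.
      apply: contra zn0 => /eqP hz; apply/eqP; apply: trmx_inj; rewrite trmx0.
      apply: (row_free_inj Bfree); rewrite mul0mx.
      by rewrite -[Bt in LHS]trmxK -trmx_mul hz trmx0.
    move=> /pH; rewrite trmx_mul trmxK /G /Y !mulmxA.
    by [].
  have GU := posdef_unit pG.
  have e2 : Y *m A *m Bt^T = - (M *m G) by rewrite BHA mulNmx -mulmxA.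
  have e3 : Bt *m A^T *m H *m Bt^T = M *m G by rewrite eM /G /Y !mulmxA.
  have MG : G *m M^T = - (M *m G).
    by rewrite -e2 -[G in LHS]sG -trmx_mul -e3 !trmx_mul !trmxK sH /Y !mulmxA.
  have skew : forall t : 'cV_(\rank K), (t^T *m M *m (G *m t)) 0 0 = 0.
    move=> t; apply: skew0.
    rewrite -[LHS]tr11 (trmx_mul (t^T *m M) (G *m t)) (trmx_mul G t) (trmx_mul t^T M) trmxK sG (mulmxA (t^T *m G) M^T t) -(mulmxA t^T G M^T) MG.
    by rewrite mulmxN mulNmx mxE_opp (mulmxA (t^T *m M) G t) (mulmxA t^T M G).
  have MY : forall u : 'cV_n.+1, M *m (Y *m u) = - (Y *m (A *m u)).
    by move=> u; rewrite (mulmxA Y A u) BHA mulNmx opprK (mulmxA M Y u).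
  set ta := invmx G *m (Y *m reV v).
  set tb := invmx G *m (Y *m imV v).
  have Gta : G *m ta = Y *m reV v by rewrite /ta mulmxA mulmxV // mul1mx.
  have Gtb : G *m tb = Y *m imV v by rewrite /tb mulmxA mulmxV // mul1mx.
  have sa := skew ta; have sb := skew tb.
  rewrite -mulmxA Gta MY ea mulmxBr -!scalemxAr -Gta -Gtb mulmxN mulmxBr in sa.
  rewrite -!scalemxAr mxE_opp mxE_sub !mxE_scale (mulmxA ta^T G ta) (mulmxA ta^T G tb) in sa.
  rewrite -mulmxA Gtb MY eb mulmxDr -!scalemxAr -Gta -Gtb mulmxN mulmxDr in sb.
  rewrite -!scalemxAr mxE_opp mxE_add !mxE_scale (mulmxA tb^T G ta) (mulmxA tb^T G tb) in sb.
  rewrite (bf_sym tb ta sG) in sb.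
  have [ga gb] := arith2 lam0 (posdef_ge0 ta pG) (posdef_ge0 tb pG) sa sb.
  have ta0 : ta = 0.
    by apply/eqP; apply: contraT => /pG; rewrite ga ltxx.
  have tb0 : tb = 0.
    by apply/eqP; apply: contraT => /pG; rewrite gb ltxx.
  by rewrite -Gta -Gtb ta0 tb0 mulmx0.
split => //.
have -> : Dp' - Dp = (2^-1 * del) *: (Hi *m S0).
  by rewrite /Dp' addrC addKr /T /S' -scalemxAr scalerA.
rewrite N2 ger0_norm //.
by rewrite mulr_ge0 // ?invr_ge0 ?ler0n // ltW.
Qed.
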